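(* Let $n\ge 1$ and let $T$ be an HR-tree whose labels are $1,\dots,n$. If $\mathrm{leaf}(T)=i$, then the permutation $w(T)\in\mathfrak S_n$ satisfies $\mathrm{run}(w(T))\ge i$.
   Context: All trees are rooted binary trees in which each child of a node is designated as a left or a right child. For a finite totally ordered set $Y$, a min–max tree on $Y$ is such a tree whose nodes are labeled bijectively by $Y$ so that the label of each node is either the minimum or the maximum of the labels in the subtree rooted at that node. A node with at least one child is an inner node; an inner node is a min-node (resp. max-node) if its label is the minimum (resp. maximum) of the labels of its subtree. An HR-tree is a min–max tree in which every inner node $s$ has a nonempty right subtree, and this right subtree contains the maximum label of the subtree rooted at $s$ if $s$ is a min-node, and the minimum label of that subtree if $s$ is a max-node (so a node with exactly one child has only a right child). The reading word $w(T)$ is the in-order reading: $w(T)=w(L)\,\ell\,w(R)$ where $\ell$ is the root label and $L,R$ are the left and right subtrees ($w(\emptyset)$ empty). $\mathrm{leaf}(T)$ is the number of nodes of $T$ without children. For $\pi=\pi_1\cdots\pi_n\in\mathfrak S_n$, $\pi$ changes direction at $i\in\{2,\dots,n-1\}$ if $\pi_{i-1}<\pi_i>\pi_{i+1}$ or $\pi_{i-1}>\pi_i<\pi_{i+1}$, and $\mathrm{run}(\pi)$ (the number of alternating runs) is $1$ plus the number of such indices $i$. *)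

(* Defs.v *)
From mathcomp Require Import all_boot.
Set Implicit Arguments. Unset Strict Implicit. Unset Printing Implicit Defensive.

Inductive tree : Type :=
| Empty : tree
| Node : tree -> nat -> tree -> tree.

Fixpoint labels (t : tree) : seq nat :=
  match t with
  | Empty => [::]
  | Node l a r => labels l ++ a :: labels r
  end.

Fixpoint word (t : tree) : seq nat :=
  match t with
  | Empty => [::]
  | Node l a r => word l ++ a :: word r
  end.

Fixpoint leaf (t : tree) : nat :=
  match t with
  | Empty => 0
  | Node Empty _ Empty => 1
  | Node l _ r => leaf l + leaf r
  end.

Definition is_min (x : nat) (s : seq nat) : bool := (x \in s) && all (fun y => x <= y) s.
Definition is_max (x : nat) (s : seq nat) : bool := (x \in s) && all (fun y => y <= x) s.

Definition is_inner (l r : tree) : bool :=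
  match l, r with Empty, Empty => false | _, _ => true end.

Fixpoint minmax_tree (t : tree) : bool :=
  match t with
  | Empty => true
  | Node l a r =>
      let s := labels (Node l a r) in
      [&& is_min a s || is_max a s, minmax_tree l & minmax_tree r]
  end.

Fixpoint hr_cond (t : tree) : bool :=
  match t with
  | Empty => true
  | Node l a r =>
      let s := labels (Node l a r) in
      [&& (is_inner l r ==>
             [&& labels r != [::],
                 is_min a s ==> has (fun x => is_max x s) (labels r) &
                 is_max a s ==> has (fun x => is_min x s) (labels r)]),
          hr_cond l & hr_cond r]
  end.

Definition HR_tree (t : tree) : bool := minmax_tree t && hr_cond t.

(* pi changes direction at 0-indexed position j (1 <= j <= size-2) *)
Definition changes_dir (w : seq nat) (j : nat) : bool :=
  let a := nth 0 w j.-1 in let b := nth 0 w j in let c := nth 0 w j.+1 in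
  ((a < b) && (b > c)) || ((a > b) && (b < c)).

Definition run (w : seq nat) : nat :=
  1 + count (changes_dir w) (iota 1 (size w - 2)).

(* Main.v *)
Require Import Defs.
From mathcomp Require Import all_boot.
From mathcomp Require Import zify.

Definition turn (x y z : nat) : bool := ((x < y) && (y > z)) || ((x > y) && (y < z)).
Definition hc (x : nat) (t : seq nat) : nat :=
  match t with y :: z :: _ => turn x y z | _ => 0 end.
Fixpoint turns (s : seq nat) : nat :=
  match s with [::] => 0 | x :: t => hc x t + turns t end.

Lemma run_turns w : run w = 1 + turns w.
Proof.
rewrite /run; congr (1 + _).
elim: w => [|x t IH] //=.
case: t IH => [|y [|z t']] IH //=.
rewrite subSS /= in IH *.
rewrite -IH.
have -> : size t' = (size t').+1 - 1 by rewrite subn1.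
rewrite subn1 /=.
rewrite (iotaDl 1 1) count_map.
congr (_ + _).
apply: eq_in_count => j; rewrite mem_iota => /andP [Hj _].
case: j Hj => [|j] //= _.
Qed.

Lemma turns_split p x a t :
  turns (p ++ x :: a :: t) = turns (p ++ [:: x; a]) + turns (x :: a :: t).
Proof.
elim: p => [|b p IH] /=.
  by rewrite /= addn0.
rewrite IH addnA; congr (_ + _ + _).
by case: p {IH} => [|c [|d p]].
Qed.

Lemma turns_rcons u a : turns u <= turns (u ++ [:: a]).
Proof.
elim: u => [|b u IH] //=.
apply: leq_add => //.
by case: u {IH} => [|c [|d u]] //=.
Qed.

Lemma arith L R A B C D : L <= 1 + A -> A <= B -> R <= 1 + C -> L + R <= 1 + (B + (1 + (D + C))).
Proof. lia. Qed.

Lemma word_labels t : word t = labels t.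
Proof. by elim: t => //= l -> a r ->. Qed.

Lemma main_lem T : uniq (labels T) -> minmax_tree T -> leaf T <= 1 + turns (word T).
Proof.
elim: T => [|l IHl a r IHr] //=.
rewrite cat_uniq /= => /and3P [Ul Hd /andP [anr Ur]] /and3P [Hm Ml Mr].
have anl : a \notin labels l by move: Hd; rewrite negb_or => /andP [].
have IHl' := IHl Ul Ml. have IHr' := IHr Ur Mr.
case El: l IHl' anl Ml => [|l1 b l2] IHl' anl Ml;
case Er: r IHr' anr Mr => [|r1 c r2] IHr' anr Mr; rewrite -?El -?Er in IHl' IHr' Hm anl anr *.
- by [].
- rewrite El /=; apply: (leq_trans IHr'); rewrite leq_add2l leq_addl //.
- rewrite Er /= addn0; apply: (leq_trans IHl').
  by rewrite leq_add2l turns_rcons.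
-
  rewrite !word_labels in IHl' IHr' *.
  have [p [x Hu]] : exists p x, labels l = rcons p x.
    case/lastP E: (labels l) => [|p x]; last by exists p, x.
    by move: E; rewrite El /= => /(f_equal size); rewrite size_cat /= addnS.
  have [y [q Hv]] : exists y q, labels r = y :: q.
    case E: (labels r) => [|y q]; last by exists y, q.
    by move: E; rewrite Er /= => /(f_equal size); rewrite size_cat /= addnS.
  have xl : x \in labels l by rewrite Hu mem_rcons inE eqxx.
  have yr : y \in labels r by rewrite Hv inE eqxx.
  have xa : x != a by apply: contraNneq anl => <-.
  have ya : y != a by apply: contraNneq anr => <-.
  have Ht : turn x a y.
    have xs : x \in labels l ++ a :: labels r by rewrite mem_cat xl.
    have ys : y \in labels l ++ a :: labels r by rewrite mem_cat in_cons yr !orbT.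
    rewrite /turn; case/orP: Hm => /andP [_ /allP H].
    + have h1 := H _ xs; have h2 := H _ ys.
      have -> : a < x by rewrite ltn_neqAle eq_sym xa.
      have -> : a < y by rewrite ltn_neqAle eq_sym ya.
      by rewrite orbT.
    + have h1 := H _ xs; have h2 := H _ ys.
      have -> : x < a by rewrite ltn_neqAle xa.
      have -> : y < a by rewrite ltn_neqAle ya.
      by [].
  rewrite Hu Hv in IHl' IHr' *.
  rewrite cat_rcons turns_split.
  have E1 : turns [:: x, a, y & q] = turn x a y + (hc a (y :: q) + turns (y :: q)) by [].
  have H1 : turns (rcons p x) <= turns (p ++ [:: x; a]) by rewrite -cat_rcons turns_rcons.
  have Ht1 : (turn x a y : nat) = 1 by rewrite Ht.
  rewrite E1 Ht1; exact: arith IHl' H1 IHr'.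
Qed.

Theorem mainTheorem1 (n : nat) (T : tree) (i : nat) :
  1 <= n ->
  perm_eq (labels T) (iota 1 n) ->
  HR_tree T ->
  leaf T = i ->
  i <= run (word T).
Proof.
move=> _ Hp /andP [Hm _] <-.
rewrite run_turns; apply: main_lem => //.
by rewrite (perm_uniq Hp) iota_uniq.
Qed.
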